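(* Let $\Sigma,\Gamma$ be finite alphabets and let $f:\Sigma^*\to\Gamma^*$ be subsequential. Then there exist an alphabet $\Delta$, a function $g:\Sigma^*\to\Delta^*$ that is $2$-TOSL on some tier on $\Sigma\cup\Delta$, and a homomorphism $h:\Delta^*\to\Gamma^*$ such that $f=h\circ g$.
   Context: Strings: $\lambda$ is the empty string; $\rtimes$ is a boundary symbol not in any alphabet. For $m\ge0$, $\mathrm{suff}^m(x)$ is the string of the last $m$ symbols of $\rtimes^mx$. $\mathrm{lcp}(A)$ is the longest common prefix of a set of strings $A$. An SFST is $T=\langle Q,\Sigma,\Gamma,q_0,\to,\sigma\rangle$ with finite state set $Q$, start state $q_0$, transition function $\to:Q\times\Sigma\to Q\times\Gamma^*$ and final output function $\sigma:Q\to\Gamma^*$; extended transitions $q\xrightarrow{x:y}r$ on strings are obtained by composing transitions and concatenating outputs. $T$ computes $f$ if $f(x)=y\sigma(q)$ whenever $q_0\xrightarrow{x:y}q$; $f$ is subsequential if some SFST computes it. A homomorphism $h:A^*\to B^*$ satisfies $h(xy)=h(x)h(y)$ for all $x,y$. For $g:\Sigma^*\to\Delta^*$: $g^{\gets}(x):=\mathrm{lcp}(\{g(xy)\mid y\in\Sigma^*\})$, and $g^{\to}_x$ is defined by $g(xy)=g^{\gets}(x)g^{\to}_x(y)$. A tier on an alphabet $A$ is a homomorphism $\tau:A^*\to A^*$ with $\tau(a)\in\{a,\lambda\}$ for all $a\in A$. $g$ is $j$-TOSL on a tier $\tau$ on $\Sigma\cup\Delta$ if for all $w,x\in\Sigma^*$,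 $\mathrm{suff}^{j-1}(\tau(g^{\gets}(w)))=\mathrm{suff}^{j-1}(\tau(g^{\gets}(x)))$ implies $g^{\to}_w=g^{\to}_x$. *)

(* Defs.v *)
From mathcomp Require Import all_boot.
Set Implicit Arguments. Unset Strict Implicit. Unset Printing Implicit Defensive.

(* suff^m(x): last m symbols of (boundary)^m x; boundary symbol encoded as None. *)
Definition suff (A : Type) (m : nat) (x : seq A) : seq (option A) :=
  let t := nseq m None ++ map Some x in drop (size t - m) t.

Definition is_lcp (B : eqType) (A : seq B -> Prop) (p : seq B) : Prop :=
  (forall s, A s -> prefix p s) /\
  (forall q, (forall s, A s -> prefix q s) -> prefix q p).

Definition is_hom (A B : Type) (h : seq A -> seq B) : Prop :=
  forall x y, h (x ++ y) = h x ++ h y.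

Definition is_tier (A : Type) (tau : seq A -> seq A) : Prop :=
  is_hom tau /\ forall a, tau [:: a] = [:: a] \/ tau [:: a] = [::].

Record SFST (S G : Type) := {
  sfst_Q : finType;
  sfst_q0 : sfst_Q;
  sfst_delta : sfst_Q -> S -> sfst_Q * seq G;
  sfst_sigma : sfst_Q -> seq G }.

Fixpoint sfst_run (S G : Type) (T : SFST S G) (q : sfst_Q T) (x : seq S)
  : sfst_Q T * seq G :=
  match x with
  | [::] => (q, [::])
  | a :: x' => let (r, y) := @sfst_delta S G T q a in
               let (r', y') := sfst_run r x' in (r', y ++ y')
  end.

Definition sfst_computes (S G : Type) (T : SFST S G) (f : seq S -> seq G) : Prop :=
  forall x, f x = (sfst_run (sfst_q0 T) x).2 ++ @sfst_sigma S G T (sfst_run (sfst_q0 T) x).1.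

Definition subsequential (S G : Type) (f : seq S -> seq G) : Prop :=
  exists T : SFST S G, sfst_computes T f.

(* g : S^* -> D^* is j-TOSL on tier tau on the alphabet S ∪ D (taken as the
   disjoint union S + D; D-symbols are injected by inr).  g^<-(w) is the lcp
   of {g(wy)}; g^->_w(y) is the unique string with g(wy) = g^<-(w) g^->_w(y),
   i.e. the drop of |g^<-(w)| symbols from g(wy). *)
Definition TOSL (S D : eqType) (j : nat) (tau : seq (S + D)%type -> seq (S + D)%type)
  (g : seq S -> seq D) : Prop :=
  forall (w x : seq S) (pw px : seq D),
    is_lcp (fun s => exists y, s = g (w ++ y)) pw ->
    is_lcp (fun s => exists y, s = g (x ++ y)) px ->
    suff (j - 1) (tau (map inr pw)) = suff (j - 1) (tau (map inr px)) ->
    forall y, drop (size pw) (g (w ++ y)) = drop (size px) (g (x ++ y)).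

(* Main.v *)
Require Import Defs.
From mathcomp Require Import all_boot.

Lemma prefix_antisym (T : eqType) (p q : seq T) : prefix p q -> prefix q p -> p = q.
Proof.
move=> /prefixP [a ->] /prefixP [b].
move=> /(f_equal size); rewrite !size_cat -addnA -{1}[size p]addn0 => /eqP.
by rewrite eqn_add2l eq_sym addn_eq0 => /andP [/eqP/size0nil -> _]; rewrite cats0.
Qed.

Lemma lcp_uniq (B : eqType) (A : seq B -> Prop) p p' : is_lcp A p -> is_lcp A p' -> p = p'.
Proof. move=> [H1 H2] [H1' H2']; apply: prefix_antisym; [apply: H2' | apply: H2]; by []. Qed.

Arguments lcp_uniq {B A p p'}.

Lemma prefix_split (T : eqType) (P q u v : seq T) x y :
  x != y -> prefix q (P ++ x :: u) -> prefix q (P ++ y :: v) -> prefix q P.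
Proof.
move=> nxy; elim: P q => [|z P IH] [|c q] //=.
- by move=> /andP [/eqP -> _] /andP [/eqP E _]; rewrite E eqxx in nxy.
- by move=> /andP [-> H1] /andP [_ H2]; apply: IH.
Qed.

Lemma suff1 (A : Type) (s : seq A) : suff 1 s = [:: last None (map Some s)].
Proof.
rewrite /suff /=; rewrite subn1 /= size_map.
elim/last_ind: s => [|s a _] //=.
by rewrite map_rcons size_rcons /= -cats1 drop_size_cat ?size_map // last_cat.
Qed.

Section Constr.
Variables (S G : Type) (T : SFST S G).
Let Q := sfst_Q T.
Let dl := @sfst_delta S G T.

Fixpoint st (q : Q) (x : seq S) : Q :=
  if x is a :: x' then st (dl q a).1 x' else q.
Fixpoint trans (q : Q) (x : seq S) : seq (Q * S) :=
  if x is a :: x' then (q, a) :: trans (dl q a).1 x' else [::].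

Lemma st_cat q x y : st q (x ++ y) = st (st q x) y.
Proof. by elim: x q => //= a x IH q. Qed.
Lemma trans_cat q x y : trans q (x ++ y) = trans q x ++ trans (st q x) y.
Proof. by elim: x q => //= a x IH q; rewrite IH. Qed.

Definition hs (d : (Q * S) + Q) : seq G :=
  match d with inl (q, a) => (dl q a).2 | inr q => sfst_sigma q end.

Lemma run_eq q x : sfst_run q x = (st q x, flatten (map hs (map inl (trans q x)))).
Proof.
elim: x q => //= a x IH q.
rewrite /dl; case: (sfst_delta q a) => r y /=.
by rewrite IH.
Qed.
End Constr.
Arguments st {S G T}.
Arguments trans {S G T}.
Arguments hs {S G T}.

Theorem proposition21 (Sigma Gamma : finType) (f : seq Sigma -> seq Gamma) :
  subsequential f ->
  exists (Delta : finType) (g : seq Sigma -> seq Delta)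
         (tau : seq (Sigma + Delta)%type -> seq (Sigma + Delta)%type)
         (h : seq Delta -> seq Gamma),
    is_tier tau /\ TOSL 2 tau g /\ is_hom h /\ forall x, f x = h (g x).
Proof.
move=> [T HT].
set Q := sfst_Q T.
pose g := fun x : seq Sigma =>
  map inl (trans (sfst_q0 T) x) ++ [:: @inr (Q * Sigma)%type Q (st (sfst_q0 T) x)].
exists ((Q * Sigma) + Q)%type, g, id, (fun s => flatten (map hs s)).
split; first by split => // a; left.
split; last first.
  split; first by move=> x y; rewrite map_cat flatten_cat.
  move=> x; rewrite HT run_eq /g /= map_cat flatten_cat /= cats0.
  by [].
have Glcp : forall (a : Sigma) w, is_lcp (fun s => exists y, s = g (w ++ y))
                                   (map inl (trans (sfst_q0 T) w)).
  move=> a w; split.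
    by move=> s [y ->]; rewrite /g /= trans_cat map_cat -catA prefix_prefix.
  move=> q Hq.
  have H1 := Hq _ (ex_intro _ [::] erefl).
  have H2 := Hq _ (ex_intro _ [:: a] erefl).
  move: H1 H2; rewrite /g !cats0 trans_cat map_cat -!catA /= => H1 H2.
  by apply: (@prefix_split _ _ _ _ _ _ _ _ H1 H2).
have Gdrop : forall w y : seq Sigma, drop (size (map (@inl _ Q) (trans (sfst_q0 T) w))) (g (w ++ y)) =
   map (@inl _ Q) (trans (st (sfst_q0 T) w) y) ++ [:: inr (st (st (sfst_q0 T) w) y)].
  by move=> w1 y1; rewrite /g /= trans_cat st_cat map_cat -catA drop_size_cat.
move=> w x pw px Hw Hx; rewrite subSS subn0 !suff1 => E y.
case: (pickP (@predT Sigma)) => [a _|H0]; last first.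
  have w0 : w = [::] by case: w {Hw E} => // b; move: (H0 b).
  have x0 : x = [::] by case: x {Hx E} => // b; move: (H0 b).
  subst w x; by rewrite (lcp_uniq Hw Hx).
rewrite (lcp_uniq Hw (Glcp a w)) (lcp_uniq Hx (Glcp a x)) !Gdrop.
rewrite (lcp_uniq Hw (Glcp a w)) (lcp_uniq Hx (Glcp a x)) in E.
suff -> : st (sfst_q0 T) w = st (sfst_q0 T) x by [].
move: E; clear Hw Hx.
elim/last_ind: w => [|w b _]; elim/last_ind: x => [|x c _] //.
- by rewrite -cats1 trans_cat !map_cat last_cat.
- by rewrite -cats1 trans_cat !map_cat last_cat.
rewrite -!cats1 !trans_cat !map_cat !last_cat /= !st_cat /= => -[-> ->].
by [].
Qed.
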